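(* Consider a one-site PTM cascade with $n\ge1$ layers. Fix all rate constants and all total amounts (all positive) except $\overline{S}_i$ for some $i\in\{1,\dots,n\}$. Then, as $\overline{S}_i$ increases, the BMSS values of $S_j^1$, $Y_j^0$ and $Y_j^1$ strictly increase for every $j=i,\dots,n$.
   Context: A one-site PTM cascade with $n$ layers has species $E=S_0^1$ and, for $i=1,\dots,n$, $S_i^0,S_i^1,F_i,Y_i^0,Y_i^1$, with reactions $S_{i-1}^1+S_i^0 \rightleftharpoons Y_i^0 \to S_{i-1}^1+S_i^1$ (rate constants $a_i^0,b_i^0,c_i^0$) and $F_i+S_i^1\rightleftharpoons Y_i^1\to F_i+S_i^0$ (rate constants $a_i^1,b_i^1,c_i^1$), all positive, mass-action kinetics. Put $\delta_i=a_i^1/(b_i^1+c_i^1)$, $\gamma_i=(c_i^1/c_i^0)\delta_i$, $\lambda_i=\frac{b_i^0+c_i^0}{a_i^0}\gamma_i$. Given total amounts $\overline{E},\overline{F}_i,\overline{S}_i$, a steady state is a real solution of: $Y_i^0=\gamma_iF_iS_i^1$, $Y_i^1=\delta_iF_iS_i^1$, $\lambda_iF_iS_i^1=S_i^0S_{i-1}^1$, $\overline{F}_i=F_i+Y_i^1$, $\overline{S}_i=S_i^0+S_i^1+Y_i^0+Y_i^1+Y_{i+1}^0$ ($i=1,\dots,n$, $Y_{n+1}^0:=0$), $\overline{E}=E+Y_1^0$. A BMSS is a steady state with positive total amounts and all concentrations nonnegative; for positive total amounts it exists and is unique. *)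

(* Defs.v *)
From Stdlib Require Import Reals Lra.
Open Scope R_scope.

(* Rate constants of the cascade, indexed by layer i = 1..n (values at other
   indices are irrelevant). *)
Record Rates := mkRates {
  a0 : nat -> R; b0 : nat -> R; c0 : nat -> R;
  a1 : nat -> R; b1 : nat -> R; c1 : nat -> R }.

Definition rates_pos (n : nat) (k : Rates) : Prop :=
  forall i, (1 <= i <= n)%nat ->
    0 < a0 k i /\ 0 < b0 k i /\ 0 < c0 k i /\
    0 < a1 k i /\ 0 < b1 k i /\ 0 < c1 k i.

Definition delta (k : Rates) (i : nat) : R := a1 k i / (b1 k i + c1 k i).
Definition gamma (k : Rates) (i : nat) : R := (c1 k i / c0 k i) * delta k i.
Definition lambda (k : Rates) (i : nat) : R :=
  ((b0 k i + c0 k i) / a0 k i) * gamma k i.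

(* Concentrations: E = S_0^1, and for layer i: S_i^0, S_i^1, F_i, Y_i^0, Y_i^1. *)
Record State := mkState {
  E : R; S0 : nat -> R; S1 : nat -> R; F : nat -> R; Y0 : nat -> R; Y1 : nat -> R }.

Definition S1prev (x : State) (i : nat) : R :=
  match i with O => E x | 1%nat => E x | S j => S1 x j end.

Definition Y0next (n : nat) (x : State) (i : nat) : R :=
  if Nat.eqb i n then 0 else Y0 x (S i).

Definition steady_state (n : nat) (k : Rates) (Ebar : R) (Fbar Sbar : nat -> R)
  (x : State) : Prop :=
  (forall i, (1 <= i <= n)%nat ->
     Y0 x i = gamma k i * F x i * S1 x i /\
     Y1 x i = delta k i * F x i * S1 x i /\
     lambda k i * F x i * S1 x i = S0 x i * S1prev x i /\
     Fbar i = F x i + Y1 x i /\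
     Sbar i = S0 x i + S1 x i + Y0 x i + Y1 x i + Y0next n x i) /\
  Ebar = E x + Y0 x 1%nat.

Definition BMSS (n : nat) (k : Rates) (Ebar : R) (Fbar Sbar : nat -> R)
  (x : State) : Prop :=
  steady_state n k Ebar Fbar Sbar x /\
  0 < Ebar /\ (forall i, (1 <= i <= n)%nat -> 0 < Fbar i /\ 0 < Sbar i) /\
  0 <= E x /\
  (forall i, (1 <= i <= n)%nat ->
     0 <= S0 x i /\ 0 <= S1 x i /\ 0 <= F x i /\ 0 <= Y0 x i /\ 0 <= Y1 x i).

(* Main.v *)
Require Import Defs.
From Stdlib Require Import Reals Lra Lia Psatz Arith.
Open Scope R_scope.

Definition sv (x : State) (j : nat) : R := match j with O => E x | S _ => S1 x j end.
Definition PP (x : State) (j : nat) : R := F x j * S1 x j.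
Definition Tl (n : nat) (k : Rates) (x : State) (m : nat) : R :=
  if Nat.eqb m n then 0 else gamma k (S m) * PP x (S m).

Lemma S1prev_S x p : S1prev x (S p) = sv x p.
Proof. destruct p; reflexivity. Qed.

Lemma sv_S x p : sv x (S p) = S1 x (S p).
Proof. reflexivity. Qed.

Lemma Pmono (d Fb b b' P P' : R) : 0<d -> 0<Fb -> 0<=b -> 0<=b' ->
  P*(1+d*b)=Fb*b -> P'*(1+d*b')=Fb*b' -> (b' <= b -> P' <= P) /\ (b' < b -> P' < P).
Proof.
  intros Hd HF Hb Hb' H3 H4.
  assert (Hid: (P - P')*((1+d*b)*(1+d*b')) = Fb*(b-b')).
  { replace ((P - P')*((1+d*b)*(1+d*b'))) with (P*(1+d*b)*(1+d*b') - P'*(1+d*b')*(1+d*b)) by ring.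
    rewrite H3, H4. ring. }
  assert (Hpos: 0 < (1+d*b)*(1+d*b')) by (apply Rmult_lt_0_compat; nra).
  split; intro; nra.
Qed.

Lemma Gl (l g d Fb a a' b b' S S' P P' : R): 0<l -> 0<g -> 0<d -> 0<Fb -> 0<a -> 0<a' ->
  0<b -> 0<b' -> 0<S -> S*a = l*P -> S'*a' = l*P' -> P*(1+d*b)=Fb*b -> P'*(1+d*b')=Fb*b' ->
  a <= a' -> b' <= b -> (S' + b' + g*P' <= S + b + g*P) /\
  (a<a' \/ b'<b -> S' + b' + g*P' < S + b + g*P).
Proof.
  intros Hl Hg Hd HF Ha Ha' Hb Hb' HS E1 E2 E3 E4 Haa Hbb.
  destruct (Pmono d Fb b b' P P' Hd HF (Rlt_le _ _ Hb) (Rlt_le _ _ Hb') E3 E4) as [m1 m2].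
  assert (HP: P' <= P) by auto.
  assert (H1: S*a <= S*a') by nra.
  assert (H2: S'*a' <= S*a') by nra.
  assert (HSS: S' <= S) by nra.
  split.
  - nra.
  - intros [h|h].
    + assert (S*a < S*a') by nra. assert (S' < S) by nra. nra.
    + assert (P' < P) by auto. assert (S'*a' < S*a') by nra. assert (S' < S) by nra. nra.
Qed.

Lemma rates_der n k m : rates_pos n k -> (1 <= m <= n)%nat ->
  0 < delta k m /\ 0 < gamma k m /\ 0 < lambda k m.
Proof.
  intros H Hm. destruct (H m Hm) as [h1 [h2 [h3 [h4 [h5 h6]]]]].
  assert (0 < delta k m) by (unfold delta; apply Rdiv_lt_0_compat; lra).
  assert (0 < gamma k m) by (unfold gamma; apply Rmult_lt_0_compat; auto; apply Rdiv_lt_0_compat; lra).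
  split; auto; split; auto.
  unfold lambda; apply Rmult_lt_0_compat; auto; apply Rdiv_lt_0_compat; lra.
Qed.

Lemma layer n k Ebar Fbar Sb x p : BMSS n k Ebar Fbar Sb x -> (S p <= n)%nat ->
  S0 x (S p) * sv x p = lambda k (S p) * PP x (S p) /\
  PP x (S p) * (1 + delta k (S p) * S1 x (S p)) = Fbar (S p) * S1 x (S p) /\
  Sb (S p) = S0 x (S p) + S1 x (S p) + (gamma k (S p) + delta k (S p)) * PP x (S p) + Tl n k x (S p).
Proof.
  intros [[Hss HE] _] Hp.
  destruct (Hss (S p)) as [y0 [y1 [lam [fb sb]]]]; [lia|].
  rewrite S1prev_S in lam. unfold PP.
  split; [rewrite <- lam; ring|]. split.
  - rewrite fb, y1; ring.
  - rewrite sb, y0, y1. unfold Y0next, Tl.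
    destruct (Nat.eqb (S p) n) eqn:Heq; [ring|].
    apply Nat.eqb_neq in Heq.
    destruct (Hss (S (S p))) as [z0 _]; [lia|]. rewrite z0. unfold PP. ring.
Qed.

Lemma posE n k Ebar Fbar Sb x : (1 <= n)%nat -> rates_pos n k -> BMSS n k Ebar Fbar Sb x -> 0 < E x.
Proof.
  intros Hn Hk HB.
  destruct (layer n k Ebar Fbar Sb x 0 HB ltac:(lia)) as [l1 _].
  destruct HB as [[Hss HE] [HEb [_ [HE0 _]]]].
  destruct (Hss 1%nat) as [y0 _]; [lia|].
  destruct (rates_der n k 1 Hk ltac:(lia)) as [_ [hg hl]].
  destruct (Rle_lt_or_eq_dec _ _ HE0) as [h|h]; auto. exfalso.
  simpl in l1. rewrite <- h in l1.
  assert (PP x 1 = 0) by nra. unfold PP in *.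
  rewrite y0 in HE. nra.
Qed.

Lemma posS n k Ebar Fbar Sb x p : rates_pos n k -> BMSS n k Ebar Fbar Sb x -> (S p <= n)%nat ->
  0 < sv x p -> 0 < S1 x (S p).
Proof.
  intros Hk HB Hp Hs.
  destruct (layer n k Ebar Fbar Sb x p HB Hp) as [l1 [l2 l3]].
  pose proof HB as HB'.
  destruct HB' as [_ [_ [Hpos [_ Hnn]]]].
  destruct (Hnn (S p)) as [n1 [n2 [n3 _]]]; [lia|].
  destruct (Hpos (S p)) as [_ hsb]; [lia|].
  destruct (rates_der n k (S p) Hk ltac:(lia)) as [hd [hg hl]].
  destruct (Rle_lt_or_eq_dec _ _ n2) as [h|h]; auto. exfalso.
  assert (HP: PP x (S p) = 0) by (unfold PP; rewrite <- h; ring).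
  assert (HS0: S0 x (S p) = 0) by (rewrite HP in l1; nra).
  rewrite HP, HS0, <- h in l3.
  unfold Tl in l3. destruct (Nat.eqb (S p) n) eqn:Heq; [lra|].
  apply Nat.eqb_neq in Heq.
  destruct (layer n k Ebar Fbar Sb x (S p) HB ltac:(lia)) as [m1 _].
  rewrite sv_S, <- h in m1.
  destruct (rates_der n k (S (S p)) Hk ltac:(lia)) as [_ [_ hl2]].
  assert (PP x (S (S p)) = 0) by nra. rewrite H in l3. lra.
Qed.

Lemma pos_all n k Ebar Fbar Sb x p : (1 <= n)%nat -> rates_pos n k -> BMSS n k Ebar Fbar Sb x ->
  (S p <= n)%nat ->
  0 < sv x p /\ 0 < S1 x (S p) /\ 0 < PP x (S p) /\ 0 < S0 x (S p).
Proof.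
  intros Hn Hk HB.
  assert (Hsv: forall p, (S p <= n)%nat -> 0 < sv x p).
  { induction p0; intros.
    - simpl. eapply posE; eauto.
    - rewrite sv_S. apply (posS n k Ebar Fbar Sb x p0 Hk HB); [lia|]. apply IHp0. lia. }
  intros Hp.
  assert (h1 := Hsv p Hp).
  assert (h2 : 0 < S1 x (S p)) by (apply (posS n k Ebar Fbar Sb x p Hk HB Hp h1)).
  destruct (layer n k Ebar Fbar Sb x p HB Hp) as [l1 [l2 _]].
  destruct (rates_der n k (S p) Hk ltac:(lia)) as [hd [hg hl]].
  destruct HB as [_ [_ [Hpos _]]]. destruct (Hpos (S p)) as [hf _]; [lia|].
  assert (q1 : 0 < Fbar (S p) * S1 x (S p)) by (apply Rmult_lt_0_compat; lra).
  assert (q2 : 0 < 1 + delta k (S p) * S1 x (S p)) by nra.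
  assert (h3 : 0 < PP x (S p)).
  { destruct (Rlt_le_dec 0 (PP x (S p))) as [h|h]; auto. nra. }
  assert (q3 : 0 < lambda k (S p) * PP x (S p)) by (apply Rmult_lt_0_compat; lra).
  assert (h4 : 0 < S0 x (S p)).
  { destruct (Rlt_le_dec 0 (S0 x (S p))) as [h|h]; auto. nra. }
  auto.
Qed.

Lemma tail_le n k Ebar Fbar Sb Sb' x x' p : (1 <= n)%nat -> rates_pos n k ->
  BMSS n k Ebar Fbar Sb x -> BMSS n k Ebar Fbar Sb' x' -> (S p <= n)%nat ->
  ((S p < n)%nat -> S1 x' (S (S p)) <= S1 x (S (S p))) -> Tl n k x' (S p) <= Tl n k x (S p).
Proof.
  intros Hn Hk HB HB' Hp H.
  unfold Tl. destruct (Nat.eqb (S p) n) eqn:Heq; [lra|].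
  apply Nat.eqb_neq in Heq.
  destruct (layer n k Ebar Fbar Sb x (S p) HB ltac:(lia)) as [_ [l2 _]].
  destruct (layer n k Ebar Fbar Sb' x' (S p) HB' ltac:(lia)) as [_ [l2' _]].
  destruct (pos_all n k Ebar Fbar Sb x (S p) Hn Hk HB ltac:(lia)) as [_ [a1 _]].
  destruct (pos_all n k Ebar Fbar Sb' x' (S p) Hn Hk HB' ltac:(lia)) as [_ [a1' _]].
  destruct (rates_der n k (S (S p)) Hk ltac:(lia)) as [hd [hg hl]].
  destruct HB as [_ [_ [Hpos _]]]. destruct (Hpos (S (S p))) as [hf _]; [lia|].
  destruct (Pmono _ _ _ _ _ _ hd hf (Rlt_le _ _ a1) (Rlt_le _ _ a1') l2 l2') as [m _].
  assert (PP x' (S (S p)) <= PP x (S (S p))) by (apply m; apply H; lia).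
  nra.
Qed.

Lemma step n k Ebar Fbar Sb Sb' x x' p : (1 <= n)%nat -> rates_pos n k ->
  BMSS n k Ebar Fbar Sb x -> BMSS n k Ebar Fbar Sb' x' -> (S p <= n)%nat ->
  Sb (S p) = Sb' (S p) ->
  (S1 x' (S p) <= S1 x (S p) -> Tl n k x' (S p) <= Tl n k x (S p)) ->
  (sv x p <= sv x' p -> S1 x (S p) <= S1 x' (S p)) /\
  (sv x p < sv x' p -> S1 x (S p) < S1 x' (S p)).
Proof.
  intros Hn Hk HB HB' Hp Hag Htail.
  destruct (layer n k Ebar Fbar Sb x p HB Hp) as [l1 [l2 l3]].
  destruct (layer n k Ebar Fbar Sb' x' p HB' Hp) as [l1' [l2' l3']].
  destruct (pos_all n k Ebar Fbar Sb x p Hn Hk HB Hp) as [a1 [a2 [a3 a4]]].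
  destruct (pos_all n k Ebar Fbar Sb' x' p Hn Hk HB' Hp) as [b1 [b2 [b3 b4]]].
  destruct (rates_der n k (S p) Hk ltac:(lia)) as [hd [hg hl]].
  assert (hf : 0 < Fbar (S p)).
  { destruct HB as [_ [_ [Hpos _]]]. destruct (Hpos (S p)) as [hf _]; [lia|]. exact hf. }
  assert (hgd : 0 < gamma k (S p) + delta k (S p)) by lra.
  split; intros Ha.
  - destruct (Rle_lt_dec (S1 x (S p)) (S1 x' (S p))) as [h|h]; auto. exfalso.
    destruct (Gl _ _ _ _ _ _ _ _ _ _ _ _ hl hgd hd hf a1 b1 a2 b2 a4 l1 l1' l2 l2' Ha
      (Rlt_le _ _ h)) as [g1 g2].
    specialize (Htail (Rlt_le _ _ h)). specialize (g2 (or_intror h)). lra.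
  - destruct (Rlt_le_dec (S1 x (S p)) (S1 x' (S p))) as [h|h]; auto. exfalso.
    destruct (Gl _ _ _ _ _ _ _ _ _ _ _ _ hl hgd hd hf a1 b1 a2 b2 a4 l1 l1' l2 l2'
      (Rlt_le _ _ Ha) h) as [g1 g2].
    specialize (Htail h). specialize (g2 (or_introl Ha)). lra.
Qed.

Lemma Qlem n k Ebar Fbar : (1 <= n)%nat -> rates_pos n k ->
  forall d p, (S p + d = n)%nat -> forall Sb Sb' x x',
  BMSS n k Ebar Fbar Sb x -> BMSS n k Ebar Fbar Sb' x' ->
  (forall l, (S p <= l <= n)%nat -> Sb l = Sb' l) ->
  (sv x p <= sv x' p -> S1 x (S p) <= S1 x' (S p)) /\
  (sv x p < sv x' p -> S1 x (S p) < S1 x' (S p)).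
Proof.
  intros Hn Hk. induction d; intros p Hd Sb Sb' x x' HB HB' Hag.
  - apply (step n k Ebar Fbar Sb Sb' x x' p Hn Hk HB HB'); [lia| apply Hag; lia |].
    intros _. apply (tail_le n k Ebar Fbar Sb Sb' x x' p Hn Hk HB HB'); [lia|]. intros; lia.
  - apply (step n k Ebar Fbar Sb Sb' x x' p Hn Hk HB HB'); [lia| apply Hag; lia |].
    intros h. apply (tail_le n k Ebar Fbar Sb Sb' x x' p Hn Hk HB HB'); [lia|].
    intros _.
    destruct (IHd (S p) ltac:(lia) Sb' Sb x' x HB' HB) as [q _].
    { intros l hl. symmetry. apply Hag. lia. }
    apply q. rewrite !sv_S. exact h.
Qed.

Lemma down n k Ebar Fbar Sb Sb' x x' m : (1 <= n)%nat -> rates_pos n k ->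
  BMSS n k Ebar Fbar Sb x -> BMSS n k Ebar Fbar Sb' x' -> (m < n)%nat ->
  (forall l, (1 <= l <= m)%nat -> Sb l = Sb' l) ->
  forall p, (p <= m)%nat -> sv x' p < sv x p -> S1 x' (S p) <= S1 x (S p) ->
  E x' < E x /\ S1 x' 1 <= S1 x 1.
Proof.
  intros Hn Hk HB HB' Hm Hag. induction p; intros Hp h1 h2.
  - simpl in h1. auto.
  - assert (Hp' : (S p <= n)%nat) by lia.
    destruct (layer n k Ebar Fbar Sb x p HB Hp') as [l1 [l2 l3]].
    destruct (layer n k Ebar Fbar Sb' x' p HB' Hp') as [l1' [l2' l3']].
    destruct (pos_all n k Ebar Fbar Sb x p Hn Hk HB Hp') as [a1 [a2 [a3 a4]]].
    destruct (pos_all n k Ebar Fbar Sb' x' p Hn Hk HB' Hp') as [b1 [b2 [b3 b4]]].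
    destruct (rates_der n k (S p) Hk ltac:(lia)) as [hd [hg hl]].
    assert (hf : 0 < Fbar (S p)).
    { destruct HB as [_ [_ [Hpos _]]]. destruct (Hpos (S p)) as [hf _]; [lia|]. exact hf. }
    assert (hgd : 0 < gamma k (S p) + delta k (S p)) by lra.
    assert (Ht : Tl n k x' (S p) <= Tl n k x (S p)).
    { apply (tail_le n k Ebar Fbar Sb Sb' x x' p Hn Hk HB HB' Hp'). intros; exact h2. }
    assert (Heq : Sb (S p) = Sb' (S p)) by (apply Hag; lia).
    rewrite !sv_S in h1.
    destruct (Rlt_le_dec (sv x' p) (sv x p)) as [h|h].
    + apply IHp; [lia | exact h | lra].
    + exfalso.
      destruct (Gl _ _ _ _ _ _ _ _ _ _ _ _ hl hgd hd hf a1 b1 a2 b2 a4 l1 l1' l2 l2' h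
        (Rlt_le _ _ h1)) as [g1 g2].
      specialize (g2 (or_intror h1)). lra.
Qed.

Theorem mainTheorem7 (n : nat) (k : Rates) (Ebar : R) (Fbar Sbar Sbar' : nat -> R)
  (i : nat) (x x' : State) :
  (1 <= n)%nat ->
  rates_pos n k ->
  (1 <= i <= n)%nat ->
  (forall l, l <> i -> Sbar' l = Sbar l) ->
  Sbar i < Sbar' i ->
  BMSS n k Ebar Fbar Sbar x ->
  BMSS n k Ebar Fbar Sbar' x' ->
  forall j, (i <= j <= n)%nat ->
    S1 x j < S1 x' j /\ Y0 x j < Y0 x' j /\ Y1 x j < Y1 x' j.
Proof.
  intros Hn Hk Hi Hag Hlt HB HB'.
  destruct i as [|q]; [lia|].
  assert (P1 : S1 x (S q) < S1 x' (S q)).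
  { destruct (Rlt_le_dec (S1 x (S q)) (S1 x' (S q))) as [h|h]; auto. exfalso.
    assert (Hq : (S q <= n)%nat) by lia.
    assert (Ht : Tl n k x' (S q) <= Tl n k x (S q)).
    { apply (tail_le n k Ebar Fbar Sbar Sbar' x x' q Hn Hk HB HB' Hq). intros hq.
      destruct (Qlem n k Ebar Fbar Hn Hk (n - S (S q)) (S q) ltac:(lia) Sbar' Sbar x' x HB' HB)
        as [qq _].
      { intros l hl. apply Hag. lia. }
      apply qq. rewrite !sv_S. exact h. }
    destruct (layer n k Ebar Fbar Sbar x q HB Hq) as [l1 [l2 l3]].
    destruct (layer n k Ebar Fbar Sbar' x' q HB' Hq) as [l1' [l2' l3']].
    destruct (pos_all n k Ebar Fbar Sbar x q Hn Hk HB Hq) as [a1 [a2 [a3 a4]]].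
    destruct (pos_all n k Ebar Fbar Sbar' x' q Hn Hk HB' Hq) as [b1 [b2 [b3 b4]]].
    destruct (rates_der n k (S q) Hk ltac:(lia)) as [hd [hg hl]].
    assert (hf : 0 < Fbar (S q)).
    { destruct HB as [_ [_ [Hpos _]]]. destruct (Hpos (S q)) as [hf _]; [lia|]. exact hf. }
    assert (hgd : 0 < gamma k (S q) + delta k (S q)) by lra.
    destruct (Rlt_le_dec (sv x' q) (sv x q)) as [h2|h2].
    - destruct q as [|q'].
      +
        simpl in h2.
        destruct HB as [[Hss HE] _]. destruct HB' as [[Hss' HE'] _].
        destruct (Hss 1%nat) as [y0 _]; [lia|].
        destruct (Hss' 1%nat) as [y0' _]; [lia|].
        destruct (Pmono _ _ _ _ _ _ hd hf (Rlt_le _ _ a2) (Rlt_le _ _ b2) l2 l2') as [m _].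
        specialize (m h). unfold PP in m.
        rewrite y0 in HE. rewrite y0' in HE'. nra.
      + destruct (down n k Ebar Fbar Sbar Sbar' x x' (S q') Hn Hk HB HB' ltac:(lia)
          ltac:(intros l hl0; symmetry; apply Hag; lia) (S q') ltac:(lia) h2 h)
          as [e1 e2].
        destruct (layer n k Ebar Fbar Sbar x 0 HB ltac:(lia)) as [_ [m2 _]].
        destruct (layer n k Ebar Fbar Sbar' x' 0 HB' ltac:(lia)) as [_ [m2' _]].
        destruct (pos_all n k Ebar Fbar Sbar x 0 Hn Hk HB ltac:(lia)) as [_ [c2 _]].
        destruct (pos_all n k Ebar Fbar Sbar' x' 0 Hn Hk HB' ltac:(lia)) as [_ [d2 _]].
        destruct (rates_der n k 1 Hk ltac:(lia)) as [hd1 [hg1 hl1]].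
        assert (hf1 : 0 < Fbar 1%nat).
        { destruct HB as [_ [_ [Hpos _]]]. destruct (Hpos 1%nat) as [hf1 _]; [lia|]. exact hf1. }
        destruct (Pmono _ _ _ _ _ _ hd1 hf1 (Rlt_le _ _ c2) (Rlt_le _ _ d2) m2 m2') as [m _].
        specialize (m e2). unfold PP in m.
        destruct HB as [[Hss HE] _]. destruct HB' as [[Hss' HE'] _].
        destruct (Hss 1%nat) as [y0 _]; [lia|].
        destruct (Hss' 1%nat) as [y0' _]; [lia|].
        rewrite y0 in HE. rewrite y0' in HE'. nra.
    - destruct (Gl _ _ _ _ _ _ _ _ _ _ _ _ hl hgd hd hf a1 b1 a2 b2 a4 l1 l1' l2 l2' h2 h)
        as [g1 _].
      lra. }
  assert (P2 : forall t, (S q + t <= n)%nat -> S1 x (S q + t) < S1 x' (S q + t)).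
  { induction t; intros ht.
    - rewrite Nat.add_0_r. exact P1.
    - replace (S q + S t)%nat with (S (S q + t)) by lia.
      destruct (Qlem n k Ebar Fbar Hn Hk (n - S (S q + t)) (S q + t) ltac:(lia)
        Sbar Sbar' x x' HB HB') as [_ qq].
      { intros l hl. symmetry. apply Hag. lia. }
      apply qq. replace (S q + t)%nat with (S (q + t)) by lia. rewrite !sv_S.
      replace (S (q + t)) with (S q + t)%nat by lia. apply IHt. lia. }
  intros j Hj.
  assert (hs : S1 x j < S1 x' j).
  { replace j with (S q + (j - S q))%nat by lia. apply P2. lia. }
  destruct j as [|j']; [lia|].
  destruct (layer n k Ebar Fbar Sbar x j' HB ltac:(lia)) as [_ [m2 _]].
  destruct (layer n k Ebar Fbar Sbar' x' j' HB' ltac:(lia)) as [_ [m2' _]].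
  destruct (pos_all n k Ebar Fbar Sbar x j' Hn Hk HB ltac:(lia)) as [_ [c2 _]].
  destruct (pos_all n k Ebar Fbar Sbar' x' j' Hn Hk HB' ltac:(lia)) as [_ [d2 _]].
  destruct (rates_der n k (S j') Hk ltac:(lia)) as [hd1 [hg1 hl1]].
  assert (hf1 : 0 < Fbar (S j')).
  { destruct HB as [_ [_ [Hpos _]]]. destruct (Hpos (S j')) as [hf1 _]; [lia|]. exact hf1. }
  destruct (Pmono _ _ _ _ _ _ hd1 hf1 (Rlt_le _ _ d2) (Rlt_le _ _ c2) m2' m2) as [_ m].
  specialize (m hs). unfold PP in m.
  destruct HB as [[Hss _] _]. destruct HB' as [[Hss' _] _].
  destruct (Hss (S j')) as [y0 [y1 _]]; [lia|].
  destruct (Hss' (S j')) as [y0' [y1' _]]; [lia|].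
  rewrite y0, y1, y0', y1'. split; [exact hs|]. split; nra.
Qed.
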